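(* Let $\ket{\psi}$ be an $n$-qubit pure state and let $\mathbf{z}_1,\dots,\mathbf{z}_k\in\{0,1\}^n$ be linearly independent over $\mathrm{GF}(2)$ with $p_\psi(\mathbf{z}_j)>0$ for all $j$. Consider the $2^{n-1}$ unordered bipartitions $\{A,[n]\setminus A\}$, $A\subseteq[n]$. Then (i) if $\emptyset\neq A\subsetneq[n]$ and $\ket{\psi}=\ket{\psi_A}\otimes\ket{\psi_{[n]\setminus A}}$ for pure states on $A$ and $[n]\setminus A$, then $|\{i\in A: (\mathbf{z}_j)_i=1\}|$ is even for every $j$; and (ii) the number of unordered bipartitions $\{A,[n]\setminus A\}$ such that $|\{i\in A:(\mathbf{z}_j)_i=1\}|$ is even for all $j=1,\dots,k$ is exactly $2^{n-1-k}$. In particular, a single observed bitstring $\mathbf{z}\neq\mathbf{0}$ rules out $\ket{\psi}$ being a product across half of all bipartitions.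
   Context: Parallelized controlled-SWAP test: for an $n$-qubit state $\ket{\psi}$, with $\mathbb{F}^{(i)}$ the swap of the $i$-th qubits of two copies of $\ket{\psi}$, the probability of outcome $\mathbf{z}\in\{0,1\}^n$ is $p_\psi(\mathbf{z})=\mathrm{Tr}\big[\big(\bigotimes_{i=1}^n\tfrac12(\mathbb{1}+(-1)^{z_i}\mathbb{F}^{(i)})\big)(\ket{\psi}\!\bra{\psi})^{\otimes 2}\big]$. A bitstring is ''measured'' if it has positive probability. *)

(* Defs.v *)
From HB Require Import structures.
From mathcomp Require Import all_boot all_order all_algebra.
Set Implicit Arguments. Unset Strict Implicit. Unset Printing Implicit Defensive.
Import Order.TTheory GRing.Theory Num.Theory.
Local Open Scope ring_scope.

(* computational basis labels of n qubits: bitstrings in {0,1}^n *)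
Definition bits (n : nat) := {ffun 'I_n -> bool}.

Definition supp n (z : bits n) : {set 'I_n} := [set i | z i].

Definition F2vec n (z : bits n) : 'rV['F_2]_n := \row_i ((z i)%:R : 'F_2).

Definition F2mat n k (z : 'I_k -> bits n) : 'M['F_2]_(k, n) :=
  \matrix_(j < k, i < n) ((z j i)%:R : 'F_2).

Section Quantum.
Variable C : numClosedFieldType.

(* pure state: unit vector of C^(2^n), indexed by the computational basis *)
Definition pure_state n (psi : bits n -> C) : Prop :=
  \sum_x psi x * (psi x)^* = 1.

(* single-qubit-pair operator (1/2)(1 + (-1)^b F) on C^2 (x) C^2,
   matrix entry <u| . |v> with u, v : bool * bool *)
Definition swap_proj (b : bool) (u v : bool * bool) : C :=
  2^-1 * (((u == v) : nat)%:R
          + (-1) ^+ b * (((u.1 == v.2) && (u.2 == v.1)) : nat)%:R).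

(* Pi_z = tensor_i (1/2)(1 + (-1)^{z_i} F^(i)) on two copies;
   basis states of two copies are pairs (x, y) of bitstrings *)
Definition Pz n (z : bits n) (u v : bits n * bits n) : C :=
  \prod_(i < n) swap_proj (z i) (u.1 i, u.2 i) (v.1 i, v.2 i).

Definition rho2 n (psi : bits n -> C) (u v : bits n * bits n) : C :=
  (psi u.1 * (psi v.1)^*) * (psi u.2 * (psi v.2)^*).

(* p_psi(z) = Tr[ Pi_z (|psi><psi|)^{(x)2} ] *)
Definition pswap n (psi : bits n -> C) (z : bits n) : C :=
  \sum_(u : bits n * bits n) \sum_(v : bits n * bits n) Pz z u v * rho2 psi v u.

(* psi = psi_A (x) psi_{[n]\A}: the amplitude factors into a function of the
   bits in A times a function of the bits outside A *)
Definition product_across n (A : {set 'I_n}) (psi : bits n -> C) : Prop :=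
  exists (f g : bits n -> C),
    [/\ forall x y : bits n, (forall i, i \in A -> x i = y i) -> f x = f y,
        forall x y : bits n, (forall i, i \notin A -> x i = y i) -> g x = g y
      & forall x, psi x = f x * g x].

End Quantum.

Definition bipart n (A : {set 'I_n}) : {set {set 'I_n}} := [set A; ~: A].

(* Main.v *)
Require Import Defs.
From HB Require Import structures.
From mathcomp Require Import all_boot all_order all_algebra.
Import Order.TTheory GRing.Theory Num.Theory.
Local Open Scope ring_scope.

From mathcomp Require Import ring zify.
Lemma card_ker n k (B : 'M['F_2]_(n,k)) : \rank B = k ->
  #|[set v : 'rV['F_2]_n | v *m B == 0]| = (2 ^ (n - k))%N.
Proof.
move=> rB.
have surj w : exists v : 'rV['F_2]_n, v *m B = w.
  have : (w <= B)%MS by apply: submx_full; rewrite /row_full rB.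
  by case/submxP => D ->; exists D.
set K := [set v : 'rV['F_2]_n | v *m B == 0].
have fib w : #|[set v : 'rV['F_2]_n | v *m B == w]| = #|K|.
  have [v0 Hv0] := surj w.
  rewrite -(card_imset K (addIr v0)); apply: eq_card => v.
  rewrite inE; apply/idP/imsetP => [/eqP Hv | [u]].
    exists (v - v0); last by rewrite subrK.
    by rewrite inE mulmxBl Hv Hv0 subrr.
  by rewrite inE => /eqP Hu ->; rewrite mulmxDl Hu Hv0 add0r.
have tot : (2 ^ n = 2 ^ k * #|K|)%N.
  have c1 : #|{: 'rV['F_2]_n}| = (2 ^ n)%N by rewrite card_mx card_Fp // mul1n.
  have c2 : #|{: 'rV['F_2]_k}| = (2 ^ k)%N by rewrite card_mx card_Fp // mul1n.
  rewrite -c1 -c2 -sum_nat_const.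
  transitivity (\sum_(v : 'rV['F_2]_n) 1)%N; first by rewrite sum1_card.
  rewrite (partition_big (fun v => v *m B) xpredT) //=.
  apply: eq_bigr => w _.
  by rewrite -(fib w) -sum1_card; apply: eq_bigl => v; rewrite inE.
have kn : (k <= n)%N by rewrite -rB rank_leq_row.
have e : (2 ^ n = 2 ^ k * 2 ^ (n - k))%N by rewrite -expnD subnKC.
by move: tot; rewrite {1}e => /eqP; rewrite eqn_pmul2l ?expn_gt0 // => /eqP <-.
Qed.
Section Key.
Variable C : numClosedFieldType.

Lemma swap_proj_flip (b : bool) (u v : bool * bool) :
  swap_proj C b u (v.2, v.1) = (-1) ^+ b * swap_proj C b u v.
Proof.
case: u v => [a1 a2] [c1 c2].
by case: b; case: a1; case: a2; case: c1; case: c2; rewrite /swap_proj /= ?expr1 ?expr0; ring.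
Qed.

Definition sw {n} (A : {set 'I_n}) (u : bits n * bits n) : bits n * bits n :=
  ([ffun i => if i \in A then u.2 i else u.1 i],
   [ffun i => if i \in A then u.1 i else u.2 i]).

Lemma sw_inj n (A : {set 'I_n}) : injective (sw A).
Proof.
apply: (can_inj (g := sw A)) => -[x y]; rewrite /sw /=; congr pair;
  apply/ffunP => i; rewrite !ffunE; by case: (i \in A).
Qed.

Lemma Pz_sw n (A : {set 'I_n}) z u v :
  Pz C z u (sw A v) = (-1) ^+ #|A :&: supp z| * Pz C z u v.
Proof.
rewrite /Pz -prodr_const (big_mkcond (fun i => i \in _)) -big_split /=.
apply: eq_bigr => i _; rewrite !ffunE in_setI /supp inE.
case: (i \in A) => /=.
  rewrite (swap_proj_flip (z i) (u.1 i, u.2 i) (v.1 i, v.2 i)).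
  by case: (z i); rewrite ?expr0 ?expr1.
by rewrite mul1r.
Qed.

Lemma rho2_sw n (A : {set 'I_n}) (psi : bits n -> C) u v :
  product_across A psi -> rho2 psi (sw A v) u = rho2 psi v u.
Proof.
case=> f [g [Hf Hg Hpsi]].
have E : psi (sw A v).1 * psi (sw A v).2 = psi v.1 * psi v.2.
  rewrite !Hpsi.
  have -> : f (sw A v).1 = f v.2.
    by apply: Hf => i iA; rewrite /sw /= ffunE iA.
  have -> : f (sw A v).2 = f v.1.
    by apply: Hf => i iA; rewrite /sw /= ffunE iA.
  have -> : g (sw A v).1 = g v.1.
    by apply: Hg => i iA; rewrite /sw /= ffunE (negbTE iA).
  have -> : g (sw A v).2 = g v.2.
    by apply: Hg => i iA; rewrite /sw /= ffunE (negbTE iA).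
  ring.
by rewrite /rho2 [LHS]mulrACA [RHS]mulrACA E.
Qed.

Lemma pswap_sign n (A : {set 'I_n}) (psi : bits n -> C) z :
  product_across A psi ->
  pswap psi z = (-1) ^+ #|A :&: supp z| * pswap psi z.
Proof.
move=> HA; rewrite /pswap mulr_sumr; apply: eq_bigr => u _.
rewrite mulr_sumr (reindex_inj (@sw_inj n A)) /=; apply: eq_bigr => v _.
by rewrite Pz_sw rho2_sw // -mulrA.
Qed.

End Key.
Lemma F2_01 (x : 'F_2) : x = (x != 0)%:R.
Proof. by apply/val_inj; case: x => [[|[|m]] Hm]. Qed.

Definition phi {n} (A : {set 'I_n}) : 'rV['F_2]_n := \row_i ((i \in A)%:R).

Lemma phi_entry n k (z : 'I_k -> bits n) (A : {set 'I_n}) j :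
  (phi A *m (F2mat z)^T) 0 j = (#|A :&: supp (z j)|)%:R.
Proof.
rewrite !mxE.
transitivity (\sum_i ((i \in A :&: supp (z j)) : nat)%:R : 'F_2).
  apply: eq_bigr => i _; rewrite !mxE in_setI /supp inE.
  by case: (i \in A); case: (z j i); rewrite /= ?mul1r ?mul0r ?mulr1.
rewrite -natr_sum; congr (_%:R).
by rewrite -sum1_card [RHS]big_mkcond; apply: eq_bigr => i _; case: (i \in _).
Qed.

Lemma F2_nat_eq0 m : ((m%:R : 'F_2) == 0) = ~~ odd m.
Proof. by rewrite -(dvdn_pcharf (pchar_Fp (isT : prime 2))) dvdn2. Qed.

Lemma phi_ker n k (z : 'I_k -> bits n) (A : {set 'I_n}) :
  (phi A *m (F2mat z)^T == 0) = [forall j, ~~ odd #|A :&: supp (z j)|].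
Proof.
apply/eqP/forallP => [H j | H].
  by rewrite -F2_nat_eq0 -phi_entry H mxE.
apply/matrixP => i j; rewrite ord1 phi_entry mxE; apply/eqP.
by rewrite F2_nat_eq0.
Qed.

Lemma parity_of_pos (C : numClosedFieldType) n (A : {set 'I_n}) (psi : bits n -> C) z :
  product_across A psi -> 0 < pswap psi z -> ~~ odd #|A :&: supp z|.
Proof.
move=> HA Hp; apply/negP => Hodd.
have E := @pswap_sign C n A psi z HA.
rewrite -signr_odd Hodd expr1 mulN1r in E.
have : pswap psi z *+ 2 == 0 by rewrite mulr2n {1}E addNr.
rewrite mulrn_eq0 /= => /eqP H0.
by rewrite H0 ltxx in Hp.
Qed.

Lemma even_weight (C : numClosedFieldType) n (psi : bits n -> C) z :
  0 < pswap psi z -> ~~ odd #|supp z|.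
Proof.
move=> Hp; rewrite -(setTI (supp z)); apply: (@parity_of_pos C n setT psi z _ Hp).
exists psi, (fun _ => 1); split => //.
- by move=> x y H; congr psi; apply/ffunP => i; apply: H; rewrite in_setT.
- by move=> x; rewrite mulr1.
Qed.

Definition Sset {n k} (z : 'I_k -> bits n) : {set {set 'I_n}} :=
  [set A : {set 'I_n} | [forall j, ~~ odd #|A :&: supp (z j)|]].

Lemma card_Sset n k (z : 'I_k -> bits n) :
  row_free (F2mat z) -> #|Sset z| = (2 ^ (n - k))%N.
Proof.
move=> rf.
have rB : \rank (F2mat z)^T = k by rewrite mxrank_tr; apply/eqP.
rewrite -(card_ker _ _ _ rB).
have -> : [set v : 'rV['F_2]_n | v *m (F2mat z)^T == 0] = phi @: Sset z.
  apply/setP => v; rewrite inE; apply/idP/imsetP => [Hv | [A]].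
    exists [set i | v 0 i != 0].
      by rewrite inE -phi_ker; have -> : phi [set i | v 0 i != 0] = v by
        apply/matrixP => i j; rewrite ord1 mxE inE [RHS]F2_01.
    by apply/matrixP => i j; rewrite ord1 mxE inE [LHS]F2_01.
  by rewrite inE -phi_ker => HA ->.
rewrite card_imset //.
move=> A B /matrixP H; apply/setP => i; have := H 0 i; rewrite !mxE.
by case: (i \in A); case: (i \in B).
Qed.

Lemma Sset_compl n k (z : 'I_k -> bits n) A :
  (forall j, ~~ odd #|supp (z j)|) -> A \in Sset z -> ~: A \in Sset z.
Proof.
move=> Hev; rewrite !inE => /forallP HA; apply/forallP => j.
have := cardsID A (supp (z j)).
rewrite setDE setIC [supp _ :&: ~: A]setIC => E.
have := Hev j; rewrite -E oddD.
by move: (HA j); case: (odd _); case: (odd _).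
Qed.

Lemma card_bipart n' (S : {set {set 'I_n'.+1}}) :
  (forall A, A \in S -> ~: A \in S) -> (2 * #|(fun A => bipart A) @: S| = #|S|)%N.
Proof.
move=> HS.
set B := [set X : {set 'I_n'.+1} | ord0 \notin X].
have bC A : bipart (~: A) = bipart A.
  by apply/setP => X; rewrite /bipart !inE setCK orbC.
have inj : {in S :&: B &, injective (fun A => bipart A)}.
  move=> X Y; rewrite !inE /= => /andP [_ HX] /andP [_ HY] E.
  have : X \in bipart Y by rewrite -E /bipart !inE eqxx.
  rewrite /bipart !inE => /orP [/eqP // | /eqP EX].
  by move: HX; rewrite EX in_setC HY.
have img : (fun A => bipart A) @: S = (fun A => bipart A) @: (S :&: B).
  apply/setP => P; apply/imsetP/imsetP => [[A AS ->] | [A]].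
    case: (boolP (ord0 \in A)) => H0.
      exists (~: A); last by rewrite bC.
      by rewrite !inE HS // negbK H0.
    by exists A => //; rewrite !inE AS.
  by rewrite inE => /andP [AS _] ->; exists A.
have c1 : #|S :\: B| = #|S :&: B|.
  rewrite -(card_imset (S :&: B) (@setC_inj _)); apply: eq_card => X.
  rewrite !inE; apply/andP/imsetP => [[H0 XS] | [Y]].
    exists (~: X); last by rewrite setCK.
    by rewrite !inE HS // inE negbK.
  rewrite !inE => /andP [YS H0] ->; split; last exact: HS.
  by rewrite in_setC negbK.
by rewrite img card_in_imset // -(cardsID B S) c1 mul2n addnn.
Qed.

Theorem corollary1 (C : numClosedFieldType) (n k : nat)
  (psi : bits n -> C) (z : 'I_k -> bits n) :
  pure_state psi ->
  row_free (F2mat z) ->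
  (forall j, 0 < pswap psi (z j)) ->
  (forall A : {set 'I_n}, A != set0 -> A != setT -> product_across A psi ->
     forall j, ~~ odd #|A :&: supp (z j)|)
  /\
  #|[set bipart A | A in [set A : {set 'I_n} |
                           [forall j, ~~ odd #|A :&: supp (z j)|]]]|
    = (2 ^ (n - 1 - k))%N.
Proof.
move=> _ rf Hp; split.
  by move=> A _ _ HA j; apply: (@parity_of_pos C n A psi (z j) HA (Hp j)).
have Hev j : ~~ odd #|supp (z j)| by apply: (@even_weight C n psi (z j) (Hp j)).
have cS := @card_Sset n k z rf.
rewrite -/(Sset z).
case: n psi z rf Hp Hev cS => [|n'] psi z rf Hp Hev cS.
  have all0 (A : {set 'I_0}) : A = set0 by apply/setP => -[].
  rewrite sub0n expn0.
  have -> : (fun A => bipart A) @: Sset z = [set bipart set0].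
    apply/setP => P; rewrite inE; apply/imsetP/eqP => [[A _ ->] | ->].
      by rewrite (all0 A).
    exists set0 => //; rewrite inE; apply/forallP => j; by rewrite set0I cards0.
  by rewrite cards1.
have := @card_bipart n' (Sset z) (fun A => @Sset_compl _ _ z A Hev).
rewrite cS; set x := #|_|.
case E : (n'.+1 - k)%N => [|m].
  by rewrite expn0 => H; lia.
rewrite expnS => /eqP; rewrite eqn_pmul2l // => /eqP ->.
have -> : (n'.+1 - 1 - k = m)%N by lia.
by [].
Qed.
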